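(* Let $M,N\ge1$, let $T_1,\dots,T_N\in\mathcal{L}(\ell^\infty_M,\mathbb{R})$, let $\mathscr{T}=\{T_n:1\le n\le N\}$, and let $A:\ell^\infty_M\to\ell^\infty_N$ be given by $Ax=(T_nx)_{n=1}^N$. Then $\mathcal{R}^2(\mathscr{T})=\pi_2(A)$.
   Context: $\ell^\infty_M$ is $\mathbb{R}^M$ with max norm, viewed as a Banach lattice with coordinatewise order. The $\ell^2$-bound $\mathcal{R}^2(\mathscr{T})$ is the least $C$ such that $\|(\sum_{i=1}^k|S_ix_i|^2)^{1/2}\|\le C\|(\sum_{i=1}^k|x_i|^2)^{1/2}\|$ for all $k$, all $S_1,\dots,S_k\in\mathscr{T}$ (not necessarily distinct) and all $x_1,\dots,x_k$. For $A\in\mathcal{L}(X,Y)$, $\pi_2(A)$ (the 2-summing norm) is the least $C$ such that $(\sum_{n=1}^k\|Ax_n\|^2)^{1/2}\le C\sup\{(\sum_{n=1}^k|\langle x_n,x^*\rangle|^2)^{1/2}:\|x^*\|_{X^*}\le1\}$ for all $k$ and $x_1,\dots,x_k\in X$. *)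

(* Defs.v *)
From Stdlib Require Import Reals List.
Open Scope R_scope.

Fixpoint rsum (k : nat) (f : nat -> R) : R :=
  match k with O => 0 | S k' => rsum k' f + f k' end.

(* Vectors of l^inf_M are functions nat -> R; only coordinates 0..M-1 matter. *)
Definition linf_norm (M : nat) (x : nat -> R) : R :=
  fold_right Rmax 0 (map (fun m => Rabs (x m)) (seq 0 M)).

(* The linear functional on l^inf_M with coefficient vector t:
   x |-> sum_{m<M} t m * x m  (every element of L(l^inf_M, R) is of this form). *)
Definition functional (M : nat) (t : nat -> R) (x : nat -> R) : R :=
  rsum M (fun m => t m * x m).

Definition lattice_sq (k : nat) (xs : nat -> nat -> R) : nat -> R :=
  fun m => sqrt (rsum k (fun i => Rsqr (Rabs (xs i m)))).

Definition op_A (M : nat) (t : nat -> nat -> R) (x : nat -> R) : nat -> R :=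
  fun n => functional M (t n) x.

(* C satisfies the l^2-bound inequality for the family {T_n : n < N};
   S_i = T_(sigma i).  The target lattice is R, where the norm of
   (sum |S_i x_i|^2)^{1/2} is its absolute value. *)
Definition R2_admissible (M N : nat) (t : nat -> nat -> R) (C : R) : Prop :=
  forall (k : nat) (sigma : nat -> nat) (xs : nat -> nat -> R),
    (forall i, (i < k)%nat -> (sigma i < N)%nat) ->
    Rabs (sqrt (rsum k (fun i => Rsqr (Rabs (functional M (t (sigma i)) (xs i))))))
      <= C * linf_norm M (lattice_sq k xs).

Definition dual_ball (M : nat) (y : nat -> R) : Prop :=
  forall x : nat -> R, Rabs (functional M y x) <= linf_norm M x.

Definition weak_set (M k : nat) (xs : nat -> nat -> R) : R -> Prop :=
  fun s => exists y, dual_ball M y /\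
    s = sqrt (rsum k (fun n => Rsqr (Rabs (functional M y (xs n))))).

Definition pi2_admissible (M N : nat) (t : nat -> nat -> R) (C : R) : Prop :=
  forall (k : nat) (xs : nat -> nat -> R) (s : R),
    is_lub (weak_set M k xs) s ->
    sqrt (rsum k (fun n => Rsqr (linf_norm N (op_A M t (xs n))))) <= C * s.

Definition is_least (E : R -> Prop) (c : R) : Prop :=
  E c /\ forall C, E C -> c <= C.

(* Main.v *)
Require Import Defs.
From Stdlib Require Import Reals List Lra Lia Psatz ClassicalEpsilon FunctionalExtensionality.
Open Scope R_scope.

Lemma rsum_ext k f g : (forall i, (i < k)%nat -> f i = g i) -> rsum k f = rsum k g.
Proof. induction k; simpl; intros H; auto. rewrite IHk by (intros; apply H; lia). rewrite H by lia. reflexivity. Qed.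

Lemma rsum_le k f g : (forall i, (i < k)%nat -> f i <= g i) -> rsum k f <= rsum k g.
Proof. induction k; simpl; intros H; [lra|]. assert (H1 := H k ltac:(lia)). assert (rsum k f <= rsum k g) by (apply IHk; intros; apply H; lia). lra. Qed.

Lemma rsum_nonneg k f : (forall i, (i < k)%nat -> 0 <= f i) -> 0 <= rsum k f.
Proof. intros H. replace 0 with (rsum k (fun _ => 0)). apply rsum_le; auto.
 induction k; simpl; auto. rewrite IHk; [lra|]. intros; apply H; lia. Qed.

Lemma rsum_plus k f g : rsum k (fun i => f i + g i) = rsum k f + rsum k g.
Proof. induction k; simpl; [lra|]. rewrite IHk; lra. Qed.

Lemma rsum_scal k c f : rsum k (fun i => c * f i) = c * rsum k f.
Proof. induction k; simpl; [lra|]. rewrite IHk; lra. Qed.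

Lemma rsum_swap k M f : rsum k (fun i => rsum M (fun m => f i m)) = rsum M (fun m => rsum k (fun i => f i m)).
Proof. induction k; simpl.
 - induction M; simpl; lra.
 - rewrite IHk. rewrite <- rsum_plus. reflexivity. Qed.

Lemma rsum_term_le k f a : (forall i, (i < k)%nat -> 0 <= f i) -> (a < k)%nat -> f a <= rsum k f.
Proof. induction k; simpl; intros H Ha; [lia|].
 assert (0 <= rsum k f) by (apply rsum_nonneg; intros; apply H; lia).
 destruct (Nat.eq_dec a k). subst; lra.
 assert (f a <= rsum k f) by (apply IHk; [intros; apply H; lia| lia]). assert (0 <= f k) by (apply H; lia). lra. Qed.

Lemma rsum_abs k f : Rabs (rsum k f) <= rsum k (fun i => Rabs (f i)).
Proof. induction k; simpl. rewrite Rabs_R0; lra.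
 eapply Rle_trans. apply Rabs_triang. lra. Qed.

Lemma wcs k w a : (forall i, (i < k)%nat -> 0 <= w i) ->
  Rsqr (rsum k (fun i => w i * a i)) <= rsum k w * rsum k (fun i => w i * Rsqr (a i)).
Proof. induction k; simpl; intros H. unfold Rsqr; lra.
 assert (IH := IHk ltac:(intros; apply H; lia)).
 set (S := rsum k (fun i => w i * a i)) in *.
 set (W := rsum k w) in *.
 set (Q := rsum k (fun i => w i * (a i)²)) in *.
 assert (HW : 0 <= W) by (apply rsum_nonneg; intros; apply H; lia).
 assert (HQ : 0 <= Q) by (apply rsum_nonneg; intros; apply Rmult_le_pos; [apply H; lia| apply Rle_0_sqr]).
 assert (Hu : 0 <= w k) by (apply H; lia).
 set (u := w k) in *. set (v := a k). unfold Rsqr in *.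
 assert (Hk : (W*(v*v)+Q)*(W*(v*v)+Q) >= (2*S*v)*(2*S*v)).
 { assert (0 <= (W*(v*v)-Q)*(W*(v*v)-Q)) by apply Rle_0_sqr.
   assert (0 <= (v*v)*(W*Q-S*S)) by (apply Rmult_le_pos; [apply Rle_0_sqr| lra]). lra. }
 assert (Hk2 : 2*S*v <= W*(v*v)+Q).
 { assert (0 <= W*(v*v)+Q) by (assert (0 <= v*v) by apply Rle_0_sqr; assert (0<= W*(v*v)) by (apply Rmult_le_pos; lra); lra). destruct (Rle_lt_dec (2*S*v) (W*(v*v)+Q)); auto.
   assert ((W*(v*v)+Q)*(W*(v*v)+Q) < (2*S*v)*(2*S*v)) by (apply Rmult_le_0_lt_compat; lra). lra. }
 nra. Qed.
Section L.
Variable x : nat -> R.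
Let F l := fold_right Rmax 0 (map (fun m => Rabs (x m)) l).
Lemma F_nonneg l : 0 <= F l.
Proof. induction l; unfold F in *; simpl; [lra|]. eapply Rle_trans; [exact IHl| apply Rmax_r]. Qed.
Lemma F_ge l m : In m l -> Rabs (x m) <= F l.
Proof. induction l; unfold F in *; simpl; [tauto|]. intros [->|H].
 apply Rmax_l. eapply Rle_trans; [apply IHl; auto| apply Rmax_r]. Qed.
Lemma F_le l B : (forall m, In m l -> Rabs (x m) <= B) -> 0 <= B -> F l <= B.
Proof. induction l; unfold F in *; simpl; intros H HB; [lra|]. apply Rmax_lub. apply H; auto. apply IHl; auto. Qed.
Lemma F_attain l : l <> nil -> exists m, In m l /\ F l = Rabs (x m).
Proof. induction l; unfold F in *; simpl; intros Hn; [exfalso; apply Hn; reflexivity|].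
 destruct l as [|b l'].
 - exists a. split; auto. simpl. apply Rmax_left. apply Rabs_pos.
 - destruct IHl as [m [Hm Hm']]; [congruence|].
   destruct (Rle_dec (Rabs (x a)) (fold_right Rmax 0 (map (fun m => Rabs (x m)) (b :: l')))).
   + exists m. split; auto. rewrite Rmax_right; auto.
   + exists a. split; auto. rewrite Rmax_left; lra. Qed.
End L.

Lemma linf_nonneg M x : 0 <= linf_norm M x.
Proof. apply F_nonneg. Qed.
Lemma linf_ge M x m : (m < M)%nat -> Rabs (x m) <= linf_norm M x.
Proof. intros; apply F_ge. apply in_seq; lia. Qed.
Lemma linf_le M x B : (forall m, (m < M)%nat -> Rabs (x m) <= B) -> 0 <= B -> linf_norm M x <= B.
Proof. intros; apply F_le; auto. intros m Hm; apply H; apply in_seq in Hm; lia. Qed.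
Lemma linf_attain M x : (1 <= M)%nat -> exists m, (m < M)%nat /\ linf_norm M x = Rabs (x m).
Proof. intros HM. destruct (F_attain x (seq 0 M)) as [m [H1 H2]].
 destruct M; [lia| simpl; congruence]. exists m; split; auto. apply in_seq in H1; lia. Qed.

Lemma lattice_eq k xs m : lattice_sq k xs m = sqrt (rsum k (fun i => Rsqr (xs i m))).
Proof. unfold lattice_sq. f_equal. apply rsum_ext. intros. rewrite <- Rsqr_abs. auto. Qed.

Lemma lattice_bound M k xs m : (m < M)%nat ->
  rsum k (fun i => Rsqr (xs i m)) <= Rsqr (linf_norm M (lattice_sq k xs)).
Proof. intros Hm. assert (H := linf_ge M (lattice_sq k xs) m Hm).
 rewrite lattice_eq in H. rewrite Rabs_pos_eq in H by apply sqrt_pos.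
 assert (H0 : 0 <= rsum k (fun i => Rsqr (xs i m))) by (apply rsum_nonneg; intros; apply Rle_0_sqr).
 rewrite <- (Rsqr_sqrt _ H0). apply Rsqr_incr_1; auto. apply sqrt_pos. apply linf_nonneg. Qed.

Lemma core M k xs y W : rsum M (fun m => Rabs (y m)) <= W ->
  rsum k (fun n => Rsqr (Rabs (functional M y (xs n)))) <= Rsqr W * Rsqr (linf_norm M (lattice_sq k xs)).
Proof. intros HW.
 set (L := linf_norm M (lattice_sq k xs)). set (S := rsum M (fun m => Rabs (y m))).
 assert (HS : 0 <= S) by (apply rsum_nonneg; intros; apply Rabs_pos).
 eapply Rle_trans with (rsum k (fun n => S * rsum M (fun m => Rabs (y m) * Rsqr (xs n m)))).
 { apply rsum_le. intros n _. rewrite <- Rsqr_abs.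
   apply Rle_trans with (Rsqr (rsum M (fun m => Rabs (y m) * Rabs (xs n m)))).
   { apply Rsqr_le_abs_1. unfold functional. eapply Rle_trans. apply rsum_abs.
     eapply Rle_trans. 2: apply Rle_abs. apply rsum_le. intros. rewrite Rabs_mult; lra. }
   replace (rsum M (fun m => Rabs (y m) * (xs n m)²)) with (rsum M (fun i => Rabs (y i) * (Rabs (xs n i))²))
     by (apply rsum_ext; intros; rewrite <- Rsqr_abs; auto).
   apply (wcs M (fun m => Rabs (y m)) (fun m => Rabs (xs n m))). intros; apply Rabs_pos. }
 rewrite rsum_scal.
 eapply Rle_trans with (S * rsum M (fun m => Rabs (y m) * Rsqr L)).
 { apply Rmult_le_compat_l; auto. rewrite <- rsum_swap.
   replace (rsum M (fun m => rsum k (fun i => Rabs (y m) * (xs i m)²))) with (rsum M (fun m => Rabs (y m) * rsum k (fun i => (xs i m)²)))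
     by (apply rsum_ext; intros; rewrite rsum_scal; auto).
   apply rsum_le. intros m Hm. apply Rmult_le_compat_l. apply Rabs_pos. apply lattice_bound; auto. }
 replace (rsum M (fun m => Rabs (y m) * L²)) with (S * L²).
 2: { unfold S. rewrite Rmult_comm, <- rsum_scal. apply rsum_ext; intros; lra. }
 assert (0 <= L²) by apply Rle_0_sqr. rewrite <- Rmult_assoc. apply Rmult_le_compat_r; auto. unfold Rsqr; apply Rmult_le_compat; auto. Qed.

Definition sgnv (y : nat -> R) : nat -> R := fun m => if Rle_dec 0 (y m) then 1 else -1.
Lemma dual_l1 M y : dual_ball M y -> rsum M (fun m => Rabs (y m)) <= 1.
Proof. intros H.
 assert (E : functional M y (sgnv y) = rsum M (fun m => Rabs (y m))).
 { unfold functional. apply rsum_ext. intros i _. unfold sgnv. destruct (Rle_dec 0 (y i)).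
   rewrite Rabs_pos_eq; lra. rewrite Rabs_left; lra. }
 assert (Hx : linf_norm M (sgnv y) <= 1).
 { apply linf_le; [|lra]. intros m _. unfold sgnv. destruct (Rle_dec 0 (y m)); [rewrite Rabs_R1; lra| rewrite Rabs_left; lra]. }
 rewrite <- E. eapply Rle_trans. apply Rle_abs. eapply Rle_trans. apply H. exact Hx. Qed.

Definition ev (m : nat) : nat -> R := fun j => if Nat.eq_dec j m then 1 else 0.

Lemma functional_ev M m x : (m < M)%nat -> functional M (ev m) x = x m.
Proof. unfold functional, ev. induction M; simpl; intros H; [lia|].
 destruct (Nat.eq_dec M m).
 - subst. replace (rsum m (fun m0 => (if Nat.eq_dec m0 m then 1 else 0) * x m0)) with 0. lra.
   clear. assert (forall n, (n <= m)%nat -> 0 = rsum n (fun m0 => (if Nat.eq_dec m0 m then 1 else 0) * x m0)).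
   { induction n; simpl; intros; auto. rewrite <- IHn by lia. destruct (Nat.eq_dec n m); [lia|lra]. }
   apply H; lia.
 - rewrite IHM by lia. lra. Qed.

Lemma ev_dual M m : (m < M)%nat -> dual_ball M (ev m).
Proof. intros Hm x. rewrite functional_ev by auto. apply linf_ge; auto. Qed.

Lemma weak_lub M k xs : (1 <= M)%nat -> is_lub (weak_set M k xs) (linf_norm M (lattice_sq k xs)).
Proof. intros HM. set (L := linf_norm M (lattice_sq k xs)).
 assert (HL : 0 <= L) by apply linf_nonneg. split.
 - intros s [y [Hy ->]]. assert (H := core M k xs y 1 (dual_l1 M y Hy)).
   rewrite Rsqr_1, Rmult_1_l in H. rewrite <- (sqrt_Rsqr L HL). apply sqrt_le_1_alt. exact H.
 - intros b Hb. destruct (linf_attain M (lattice_sq k xs) HM) as [m [Hm E]].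
   unfold L; rewrite E. rewrite Rabs_pos_eq by (unfold lattice_sq; apply sqrt_pos).
   apply Hb. exists (ev m). split. apply ev_dual; auto. unfold lattice_sq. f_equal.
   apply rsum_ext. intros. rewrite functional_ev; auto. Qed.

Lemma equiv M N t C : (1 <= M)%nat -> (1 <= N)%nat ->
  (R2_admissible M N t C <-> pi2_admissible M N t C).
Proof. intros HM HN. split.
 - intros H k xs s Hs. rewrite (is_lub_u _ _ _ Hs (weak_lub M k xs HM)).
   assert (Hc : forall n, exists j, (j < N)%nat /\ linf_norm N (op_A M t (xs n)) = Rabs (op_A M t (xs n) j)).
   { intros n. apply linf_attain; auto. }
   set (sigma := fun n => proj1_sig (constructive_indefinite_description _ (Hc n))).
   assert (Hsig : forall n, (sigma n < N)%nat /\ linf_norm N (op_A M t (xs n)) = Rabs (op_A M t (xs n) (sigma n))).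
   { intros n. unfold sigma. destruct (constructive_indefinite_description _ (Hc n)); auto. }
   assert (H2 := H k sigma xs ltac:(intros; apply Hsig)).
   rewrite Rabs_pos_eq in H2 by apply sqrt_pos.
   eapply Rle_trans; [|exact H2]. right. f_equal. apply rsum_ext. intros n _.
   rewrite (proj2 (Hsig n)). reflexivity.
 - intros H k sigma xs Hsig. rewrite Rabs_pos_eq by apply sqrt_pos.
   eapply Rle_trans; [|apply (H k xs _ (weak_lub M k xs HM))].
   apply sqrt_le_1_alt. apply rsum_le. intros i Hi. apply Rsqr_incr_1.
   + apply (linf_ge N (op_A M t (xs i)) (sigma i)). auto.
   + apply Rabs_pos.
   + apply linf_nonneg. Qed.

Lemma rsum_const k c : rsum k (fun _ => c) = INR k * c.
Proof. induction k; simpl rsum; [simpl; lra|]. rewrite IHk, S_INR. ring. Qed.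

Lemma R2_bounded M N t : exists C, R2_admissible M N t C.
Proof.
 set (K := rsum N (fun j => rsum M (fun m => Rabs (t j m)))).
 assert (HK : 0 <= K) by (apply rsum_nonneg; intros; apply rsum_nonneg; intros; apply Rabs_pos).
 exists (INR N * K). intros k sigma xs Hsig.
 set (L := linf_norm M (lattice_sq k xs)). assert (HL : 0 <= L) by apply linf_nonneg.
 rewrite Rabs_pos_eq by apply sqrt_pos.
 assert (HNK : 0 <= INR N * K * L) by (apply Rmult_le_pos; [apply Rmult_le_pos; [apply pos_INR|auto]|auto]).
 rewrite <- (sqrt_Rsqr _ HNK). apply sqrt_le_1_alt.
 apply Rle_trans with (rsum k (fun i => rsum N (fun j => Rsqr (Rabs (functional M (t j) (xs i)))))).
 { apply rsum_le. intros i Hi. apply (rsum_term_le N (fun j => Rsqr (Rabs (functional M (t j) (xs i))))).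
   intros; apply Rle_0_sqr. auto. }
 rewrite rsum_swap.
 apply Rle_trans with (rsum N (fun j => Rsqr K * Rsqr L)).
 { apply rsum_le. intros j Hj. apply core.
   apply (rsum_term_le N (fun j => rsum M (fun m => Rabs (t j m)))); auto.
   intros; apply rsum_nonneg; intros; apply Rabs_pos. }
 rewrite rsum_const.
 destruct N. { simpl. rewrite Rmult_0_l. rewrite Rmult_0_l, Rmult_0_l. rewrite Rsqr_0. lra. }
 assert (H1 : 1 <= INR (S N)) by (rewrite S_INR; assert (0 <= INR N) by apply pos_INR; lra).
 assert (0 <= K² * L²) by (apply Rmult_le_pos; apply Rle_0_sqr).
 replace (INR (S N) * K * L)² with (INR (S N) * INR (S N) * (K² * L²)) by (unfold Rsqr; ring).
 apply Rmult_le_compat_r; auto.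
 replace (INR (S N)) with (INR (S N) * 1) at 1 by ring. apply Rmult_le_compat_l; lra. Qed.

Lemma R2_nonneg M N t C : (1 <= M)%nat -> (1 <= N)%nat -> R2_admissible M N t C -> 0 <= C.
Proof. intros HM HN H.
 assert (Hs : forall i, (i < 1)%nat -> (0 < N)%nat) by (intros; lia).
 assert (H1 := H 1%nat (fun _ => 0%nat) (fun _ _ => 1) Hs).
 assert (E : linf_norm M (lattice_sq 1 (fun _ _ => 1)) = 1).
 { assert (Hl : lattice_sq 1 (fun _ _ => 1) = fun _ => 1).
   { unfold lattice_sq. simpl. apply functional_extensionality_dep. intros.
     rewrite Rabs_R1, Rsqr_1, Rplus_0_l. apply sqrt_1. }
   rewrite Hl. apply Rle_antisym. apply linf_le; [intros; rewrite Rabs_R1; lra| lra].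
   assert (H2 := linf_ge M (fun _ => 1) 0%nat ltac:(lia)). simpl in H2. rewrite Rabs_R1 in H2. exact H2. }
 rewrite E, Rmult_1_r in H1. eapply Rle_trans; [apply Rabs_pos| exact H1]. Qed.

Lemma R2_least M N t : (1 <= M)%nat -> (1 <= N)%nat -> exists c, is_least (R2_admissible M N t) c.
Proof. intros HM HN. destruct (R2_bounded M N t) as [C0 HC0].
 set (F := fun x => R2_admissible M N t (- x)).
 assert (Hb : bound F).
 { exists 0. intros x Hx. assert (H := R2_nonneg M N t _ HM HN Hx). lra. }
 assert (Hne : exists x, F x) by (exists (- C0); unfold F; rewrite Ropp_involutive; auto).
 destruct (completeness F Hb Hne) as [u [Hu1 Hu2]].
 exists (- u). split.
 - intros k sigma xs Hsig.
   set (a := linf_norm M (lattice_sq k xs)).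
   set (b := Rabs (sqrt (rsum k (fun i => Rsqr (Rabs (functional M (t (sigma i)) (xs i))))))).
   assert (Ha : 0 <= a) by apply linf_nonneg.
   destruct (Rle_lt_or_eq_dec _ _ Ha) as [Hp|Hz].
   + assert (Hub : is_upper_bound F (- (b / a))).
     { intros x Hx. assert (H := Hx k sigma xs Hsig). fold a b in H.
       assert (b / a <= - x).
       { unfold Rdiv. apply Rmult_le_reg_r with a; auto. rewrite Rmult_assoc, Rinv_l by lra. lra. }
       lra. }
     assert (H := Hu2 _ Hub).
     assert (b / a <= - u) by lra.
     unfold Rdiv in H0. apply Rmult_le_compat_r with (r := a) in H0; [|lra].
     rewrite Rmult_assoc, Rinv_l, Rmult_1_r in H0 by lra. exact H0.
   + assert (H := HC0 k sigma xs Hsig). fold a b in H. rewrite <- Hz in *. lra.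
 - intros C HC. assert (F (- C)) by (unfold F; rewrite Ropp_involutive; auto).
   assert (H2 := Hu1 _ H). lra. Qed.

Theorem mainTheorem12 (M N : nat) (t : nat -> nat -> R) :
  (1 <= M)%nat -> (1 <= N)%nat ->
  exists c, is_least (R2_admissible M N t) c /\ is_least (pi2_admissible M N t) c.
Proof.
 intros HM HN. destruct (R2_least M N t HM HN) as [c [Hc1 Hc2]]. exists c. split.
 - split; auto.
 - split. apply equiv; auto. intros C HC. apply Hc2. apply equiv; auto. Qed.
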